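(* For $A=\mathbb Z\times\mathbb Z_2$ the Tamanoi type equation fails. Concretely, $\zeta^{(A)}_{({\rm pt},\{e\})}(t)=1+t+2t^2+O(t^3)$, $\zeta^{(A)}_{({\rm pt},\mathbb Z_2)}(t)=1+2t+4t^2+O(t^3)$ and $\chi^{(A)}({\rm pt},\mathbb Z_2)=2$, so that $\zeta^{(A)}_{({\rm pt},\mathbb Z_2)}(t)\neq\left(\zeta^{(A)}_{({\rm pt},\{e\})}(t)\right)^{\chi^{(A)}({\rm pt},\mathbb Z_2)}$.
   Context: For a finitely generated group $A$ and finite group $G$ acting on the one-point space ${\rm pt}$, $\chi^{(A)}({\rm pt},G)=|{\rm Hom}(A,G)|/|G|$. $G_n=G\wr S_n=G^n\rtimes S_n$ is the wreath product (multiplication $((g_i),s)((g'_i),s')=((g_ig'_{s^{-1}(i)}),ss')$), and $\zeta^{(A)}_{({\rm pt},G)}(t)=1+\sum_{n\ge1}\chi^{(A)}({\rm pt},G_n)t^n$. For a finitely generated $A$, the Tamanoi type equation is said to hold if there is a power series $Z_A(t)\in1+t\mathbb Q[[t]]$ such that for every finite group $G$ and every $G$-invariant union $X$ of cells of a finite $G$-CW-complex, $1+\sum_{n\ge1}\chi^{(A)}(X^n,G_n)t^n=Z_A(t)^{\chi^{(A)}(X,G)}$, where $\chi^{(A)}(X,G)=\frac1{|G|}\sum_{\varphi\in{\rm Hom}(A,G)}\chi(X^{\varphi(A)})$ with $\chi$ the Euler characteristic with compact support, $G_n$ acting on $X^n$ by $((g_i),s)(x_i)=(g_ix_{s^{-1}(i)})$,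 and $f^c=\exp(c\log f)$; necessarily $Z_A=\zeta^{(A)}_{({\rm pt},\{e\})}$. *)

(* Defs.v *)
From HB Require Import structures.
From mathcomp Require Import all_boot all_order all_algebra all_fingroup.
From mathcomp Require Import boolp.
Set Implicit Arguments. Unset Strict Implicit. Unset Printing Implicit Defensive.
Import GRing.Theory Num.Theory.

(* A = Z x Z_2, represented by the additive group int * 'Z_2.             *)

Definition isHomA (T : Type) (mul : T -> T -> T) (f : int * 'Z_2 -> T) : Prop :=
  forall (a1 a2 : int) (b1 b2 : 'Z_2),
    f ((a1 + a2)%R, (b1 + b2)%R) = mul (f (a1, b1)) (f (a2, b2)).

(* Hom(A, T), identified (injectively, since (1,0) and (0,1) generate A)
   with the set of pairs (f(1,0), f(0,1)) for homomorphisms f. *)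
Definition HomA (T : finType) (mul : T -> T -> T) : {set T * T} :=
  [set p : T * T | `[< exists f : int * 'Z_2 -> T,
        [/\ isHomA mul f, f (1%R, 0%R) = p.1 & f (0%R, 1%R) = p.2] >] ].

Definition chiA_gen (T : finType) (mul : T -> T -> T) : rat :=
  (#|HomA mul|%:R / #|T|%:R)%R.

Definition chiA (gT : finGroupType) : rat := chiA_gen (@mulg gT).

(* Wreath product G_n = G^n x| S_n with                                   *)
(*   ((g_i), s) ((g'_i), s') = ((g_i g'_{s^{-1}(i)}), s s')               *)
(* where s s' is composition of maps (first s', then s); in MathComp's     *)
(* perm group (s' * s) x = s (s' x), so s \o s' is  s' * s.               *)

Definition wreath (gT : finGroupType) (n : nat) : finType :=
  ({ffun 'I_n -> gT} * {perm 'I_n})%type.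

Definition wreath_mul (gT : finGroupType) (n : nat)
    (x y : wreath gT n) : wreath gT n :=
  ([ffun i => (x.1 i * y.1 ((x.2)^-1 i))%g], (y.2 * x.2)%g).

Definition chiA_wreath (gT : finGroupType) (n : nat) : rat :=
  chiA_gen (@wreath_mul gT n).

Definition fps := nat -> rat.

Definition fps_one : fps := fun n => if n is 0 then 1%R else 0%R.
Definition fps_add (f g : fps) : fps := fun n => (f n + g n)%R.
Definition fps_scale (c : rat) (f : fps) : fps := fun n => (c * f n)%R.
Definition fps_mul (f g : fps) : fps :=
  fun n => (\sum_(i < n.+1) f i * g (n - i)%N)%R.
Fixpoint fps_pow (f : fps) (k : nat) : fps :=
  if k is k'.+1 then fps_mul f (fps_pow f k') else fps_one.

Definition fps_nc (f : fps) : fps := fun n => if n is 0 then 0%R else f n.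

(* log f = sum_{k>=1} (-1)^{k+1} (f - 1)^k / k, for f(0) = 1;
   the n-th coefficient only involves k <= n. *)
Definition fps_log (f : fps) : fps :=
  fun n => (\sum_(1 <= k < n.+1)
              ((-1) ^+ k.+1 / k%:R) * fps_pow (fps_nc f) k n)%R.

Definition fps_exp (g : fps) : fps :=
  fun n => (\sum_(0 <= k < n.+1) (k`!%:R)^-1 * fps_pow (fps_nc g) k n)%R.

Definition fps_powr (f : fps) (c : rat) : fps :=
  fps_exp (fps_scale c (fps_log f)).

Definition zetaA (gT : finGroupType) : fps :=
  fun n => if n is 0 then 1%R else chiA_wreath gT n.

(* Main.v *)
From HB Require Import structures.
Require Import Defs.
From mathcomp Require Import all_boot all_order all_algebra all_fingroup.
From mathcomp Require Import boolp.
From mathcomp Require Import ring.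
Import GRing.Theory Num.Theory.

Lemma hom_le (T U : finType) (mT : T -> T -> T) (mU : U -> U -> U)
  (phi : T -> U) : injective phi ->
  (forall x y, phi (mT x y) = mU (phi x) (phi y)) ->
  #|HomA mT| <= #|HomA mU|.
Proof.
move=> inj hm.
pose F := fun p : T * T => (phi p.1, phi p.2).
have injF : injective F by move=> [x1 x2] [y1 y2] [/inj -> /inj ->].
rewrite -(card_imset _ injF); apply: subset_leq_card.
apply/subsetP => _ /imsetP [[x y] hxy ->].
move: hxy; rewrite !inE => /asboolP [f [hf h1 h2]].
apply/asboolP; exists (phi \o f); split => /=.
- by move=> a1 a2 b1 b2 /=; rewrite hf hm.
- by rewrite h1.
- by rewrite h2.
Qed.

Lemma hom_transport (T U : finType) (mT : T -> T -> T) (mU : U -> U -> U)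
  (phi : T -> U) (psi : U -> T) : cancel phi psi -> cancel psi phi ->
  (forall x y, phi (mT x y) = mU (phi x) (phi y)) ->
  #|HomA mT| = #|HomA mU|.
Proof.
move=> c1 c2 hm; apply/eqP; rewrite eqn_leq.
rewrite (@hom_le T U mT mU phi (can_inj c1) hm) (@hom_le U T mU mT psi (can_inj c2)) //.
by move=> x y; apply: (can_inj c1); rewrite hm !c2.
Qed.

Lemma hom_card1 (T : finType) (mT : T -> T -> T) : #|T| = 1 -> #|HomA mT| = 1.
Proof.
move=> T1; have [x Tx] : exists x : T, forall y, y = x.
  have /eqP/card1P [x Hx] := T1; exists x => y; apply/eqP.
  by rewrite -[_ == _]Hx.
apply/eqP; rewrite eqn_leq; apply/andP; split.
  by apply: leq_trans (max_card _) _; rewrite card_prod T1.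
apply/card_gt0P; exists (x, x); rewrite inE; apply/asboolP.
exists (fun _ => x); split => //=; by move=> *; rewrite -(Tx (mT x x)).
Qed.


Section Char.
Variable gT : finGroupType.
Local Open Scope group_scope.

Definition pz (a : gT) (z : int) : gT := a ^+ `|(z %% (Posz #[a]))%Z|%N.

Lemma pzD a z1 z2 : pz a (z1 + z2)%R = pz a z1 * pz a z2.
Proof.
rewrite /pz -expgD -(expg_mod_order a (_ + _)%N) -[in LHS](expg_mod_order a).
congr (a ^+ _).
have n0 : (Posz #[a]) != 0%R by rewrite eqz_nat -lt0n order_gt0.
apply/eqP; rewrite -eqz_nat -!modz_nat PoszD !gez0_abs ?modz_ge0 //.
by rewrite modz_mod modzDm.
Qed.

Lemma pz1 a : pz a 1%R = a.
Proof. by rewrite /pz modz_nat absz_nat expg_mod_order expg1. Qed.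

Lemma pz0 a : pz a 0%R = 1.
Proof. by rewrite /pz modz_nat absz_nat mod0n expg0. Qed.

Lemma Z2_11 : (1 + 1 : 'Z_2)%R = 0%R.
Proof. by apply/val_inj. Qed.

Lemma charHom : HomA (@mulg gT) =
  [set p : gT * gT | (p.1 * p.2 == p.2 * p.1) && (p.2 * p.2 == 1)].
Proof.
apply/setP => -[a b]; rewrite !inE /=; apply/asboolP/idP.
- case=> f [hf ha hb].
  have f00 : f (0%R, 0%R) = 1.
    have := hf 0%R 0%R 0%R 0%R; rewrite !addr0.
    by rewrite -{1}[f (0%R, 0%R)]mulg1 => /mulgI /esym.
  have h1 := hf 1%R 0%R 0%R 1%R; have h2 := hf 0%R 1%R 1%R 0%R.
  rewrite !addr0 !add0r in h1 h2.
  have h3 := hf 0%R 0%R 1%R 1%R; rewrite addr0 Z2_11 f00 hb in h3.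
  by rewrite -h3 eqxx -ha -hb -h1 -h2 eqxx.
- case/andP=> /eqP cab /eqP bb.
  exists (fun p => pz a p.1 * b ^+ (val p.2)); split => /=.
  + move=> a1 a2 b1 b2; rewrite pzD.
    have -> : b ^+ (val (b1 + b2)%R) = b ^+ b1 * b ^+ b2.
      by rewrite -expgD /= (@expg_mod _ 2) // expgS expg1.
    rewrite !mulgA; congr (_ * _); rewrite -!mulgA; congr (_ * _).
    apply: commuteX2; exact: cab.
  + by rewrite pz1 expg0 mulg1.
  + by rewrite pz0 expg1 mul1g.
Qed.
End Char.

Local Open Scope group_scope.

Definition b2 (i : 'I_2) : bool := val i == 1%N.
Definition ib (b : bool) : 'I_2 := if b then ord_max else ord0.
Lemma I2E (i : 'I_2) : i = ord0 \/ i = ord_max.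
Proof. by case: i => [[|[|]]] //= ?; [left|right]; apply/val_inj. Qed.
Lemma b2K : cancel b2 ib.
Proof. by move=> i; case: (I2E i) => ->. Qed.
Lemma ibK : cancel ib b2.
Proof. by case. Qed.
Lemma b2M (i j : ('I_2 : finGroupType)) : b2 (i * j) = b2 i (+) b2 j.
Proof. by case: (I2E i) => ->; case: (I2E j) => ->. Qed.

Definition tp : {perm 'I_2} := tperm ord0 ord_max.
Lemma P2E (s : {perm 'I_2}) : s = 1 \/ s = tp.
Proof.
have hmax : s ord_max != s ord0 by rewrite (inj_eq perm_inj).
case: (I2E (s ord0)) => h; [left|right]; apply/permP => i;
  case: (I2E i) => ->; rewrite ?perm1 ?tpermL ?tpermR ?h //.
- by move: hmax; rewrite h; case: (I2E (s ord_max)) => ->.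
- by move: hmax; rewrite h; case: (I2E (s ord_max)) => ->.
Qed.
Lemma tp1 : tp != 1.
Proof. by apply/eqP => /(congr1 (fun s : {perm 'I_2} => s ord0)); rewrite tpermL perm1. Qed.
Lemma tpV : tp^-1 = tp. Proof. exact: tpermV. Qed.
Lemma tp2 : tp * tp = 1. Proof. exact: tperm2. Qed.
Lemma P1E (s : {perm 'I_1}) : s = 1.
Proof. by apply/permP => i; rewrite perm1 (ord1 (s i)) (ord1 i). Qed.

Definition M2 : Type := bool.
HB.instance Definition _ := Finite.on M2.
Definition mul2 (x y : M2) : M2 := x (+) y.
Lemma mul2A : associative mul2. Proof. by move=> x y z; rewrite /mul2 addbA. Qed.
Lemma mul12 : left_id (false : M2) mul2. Proof. by case. Qed.
Lemma mulV2 : left_inverse (false : M2) id mul2. Proof. by case. Qed.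
HB.instance Definition _ := Finite_isGroup.Build M2 mul2A mul12 mulV2.

Definition M8 : Type := (bool * bool * bool)%type.
HB.instance Definition _ := Finite.on M8.
Definition mul8 (x y : M8) : M8 :=
  let: (x0, x1, c) := x in let: (y0, y1, d) := y in
  (x0 (+) (if c then y1 else y0), x1 (+) (if c then y0 else y1), c (+) d).
Definition one8 : M8 := (false, false, false).
Definition inv8 (x : M8) : M8 :=
  let: (x0, x1, c) := x in (if c then x1 else x0, if c then x0 else x1, c).
Lemma mul8A : associative mul8.
Proof. by move=> [[? ?] []] [[? ?] []] [[? ?] []] /=; rewrite ?addbA. Qed.
Lemma mul18 : left_id one8 mul8.
Proof. by move=> [[? ?] []]. Qed.
Lemma mulV8 : left_inverse one8 inv8 mul8.
Proof. by move=> [[[] []] []]. Qed.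
HB.instance Definition _ := Finite_isGroup.Build M8 mul8A mul18 mulV8.

Lemma card_set_pair (T : finType) (P : T -> T -> bool) :
  #|[set p : T * T | P p.1 p.2]| = (\sum_(a : T) \sum_(b : T) P a b)%N.
Proof.
rewrite cardsE -sum1_card big_mkcond /= pair_big /=.
by apply: eq_bigr => -[a b] _; rewrite unfold_in /=; case: (P a b).
Qed.
Lemma sum8 (F : bool * bool * bool -> nat) : (\sum_(x : bool * bool * bool) F x =
  \sum_(a : bool) \sum_(b : bool) \sum_(c : bool) F (a, b, c))%N.
Proof.
rewrite pair_bigA /= pair_bigA /=.
by apply: eq_bigr => -[[]].
Qed.

Lemma cnt2 : #|[set p : M2 * M2 | (p.1 * p.2 == p.2 * p.1) && (p.2 * p.2 == 1)]| = 4.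
Proof. by rewrite (@card_set_pair _ (fun a b => (a * b == b * a) && (b * b == 1))) !big_bool. Qed.
Lemma cnt8 : #|[set p : M8 * M8 | (p.1 * p.2 == p.2 * p.1) && (p.2 * p.2 == 1)]| = 32.
Proof.
rewrite (@card_set_pair _ (fun a b => (a * b == b * a) && (b * b == 1))). rewrite [LHS]sum8.
under eq_bigr do under eq_bigr do under eq_bigr do rewrite sum8.
by rewrite !big_bool.
Qed.
Lemma card2 : #|{: M2}| = 2. Proof. by rewrite card_bool. Qed.
Lemma card8 : #|{: M8}| = 8. Proof. by rewrite !card_prod card_bool. Qed.

Lemma card_wr (gT : finGroupType) n : #|{: wreath gT n}| = (#|gT| ^ n * n`!)%N.
Proof. by rewrite /wreath card_prod card_ffun card_ord card_Sn. Qed.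

Lemma homI1 : #|HomA (@mulg ('I_1 : finGroupType))| = 1%N.
Proof. by apply: hom_card1; rewrite card_ord. Qed.

Lemma homI2 : #|HomA (@mulg ('I_2 : finGroupType))| = 4%N.
Proof.
rewrite (@hom_transport _ _ _ (@mulg M2) b2 ib b2K ibK) ?charHom ?cnt2 //.
exact: b2M.
Qed.

Lemma homW11 : #|HomA (@wreath_mul ('I_1 : finGroupType) 1)| = 1%N.
Proof. by apply: hom_card1; rewrite card_wr card_ord. Qed.

Definition phi21 (x : wreath ('I_2 : finGroupType) 1) : M2 := b2 (x.1 ord0).
Definition psi21 (b : M2) : wreath ('I_2 : finGroupType) 1 := ([ffun _ => ib b], 1).
Lemma homW21 : #|HomA (@wreath_mul ('I_2 : finGroupType) 1)| = 4%N.
Proof.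
rewrite (@hom_transport _ _ _ (@mulg M2) phi21 psi21) ?charHom ?cnt2 //.
- move=> [f s]; rewrite /phi21 /psi21 /= (P1E s); congr (_, _).
  by apply/ffunP => i; rewrite ffunE (ord1 i) b2K.
- by move=> b; rewrite /phi21 /psi21 /= ffunE ibK.
- move=> [f s] [g t]; rewrite /phi21 /= ffunE (P1E s) invg1 perm1.
  exact: b2M.
Qed.

Definition phi12 (x : wreath ('I_1 : finGroupType) 2) : M2 := x.2 != 1.
Definition psi12 (b : M2) : wreath ('I_1 : finGroupType) 2 :=
  ([ffun _ => ord0], if b then tp else 1).
Lemma homW12 : #|HomA (@wreath_mul ('I_1 : finGroupType) 2)| = 4%N.
Proof.
rewrite (@hom_transport _ _ _ (@mulg M2) phi12 psi12) ?charHom ?cnt2 //.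
- move=> [f s]; rewrite /phi12 /psi12 /=; congr (_, _).
    by apply/ffunP => i; rewrite ffunE (ord1 (f i)).
  by case: (P2E s) => ->; rewrite ?eqxx ?tp1.
- by case; rewrite /phi12 /psi12 /= ?eqxx ?tp1.
- move=> [f s] [g t]; rewrite /phi12 /=.
  by case: (P2E s) => ->; case: (P2E t) => ->; rewrite ?mulg1 ?mul1g ?tp2 ?eqxx ?tp1.
Qed.

Definition phi22 (x : wreath ('I_2 : finGroupType) 2) : M8 :=
  (b2 (x.1 ord0), b2 (x.1 ord_max), x.2 != 1).
Definition psi22 (x : M8) : wreath ('I_2 : finGroupType) 2 :=
  let: (x0, x1, c) := x in
  ([ffun i => if i == ord0 then ib x0 else ib x1], if c then tp else 1).
Lemma homW22 : #|HomA (@wreath_mul ('I_2 : finGroupType) 2)| = 32%N.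
Proof.
rewrite (@hom_transport _ _ _ (@mulg M8) phi22 psi22) ?charHom ?cnt8 //.
- move=> [f s]; rewrite /phi22 /psi22 /=; congr (_, _).
    by apply/ffunP => i; rewrite ffunE; case: (I2E i) => -> /=; rewrite b2K.
  by case: (P2E s) => ->; rewrite ?eqxx ?tp1.
- by move=> [[x0 x1] []]; rewrite /phi22 /psi22 /= !ffunE /= !ibK ?eqxx ?tp1.
- move=> [f s] [g t]; rewrite /phi22 /= !ffunE.
  case: (P2E s) => ->; case: (P2E t) => ->;
    rewrite ?invg1 ?tpV ?perm1 ?tpermL ?tpermR ?mulg1 ?mul1g ?tp2 ?eqxx ?tp1 !b2M //.
Qed.

Local Open Scope ring_scope.

Ltac expand := rewrite /fps_powr /fps_exp /fps_scale /fps_log /fps_mul /fps_nc /fps_one /=;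
  do ![progress (rewrite /fps_mul /fps_one /=) | (rewrite big_geq; [rewrite /= | by []]) | (rewrite big_nat_recr; [rewrite /= | by []]) | rewrite big_ord_recr /= | rewrite big_ord0 /=]; rewrite ?factS ?fact0 ?subn0 ?subn1 /=.

Lemma powr1 (f : fps) (c : rat) : fps_powr f c 1 = c * f 1%N.
Proof. expand. field. all: by []. Qed.
Lemma powr2 (f : fps) (c : rat) : fps_powr f c 2 = c * (f 2%N - f 1%N ^+ 2 / 2) + c ^+ 2 * f 1%N ^+ 2 / 2.
Proof. expand. field. all: by []. Qed.

Lemma z11 : zetaA ('I_1 : finGroupType) 1 = 1.
Proof. rewrite /zetaA /chiA_wreath /chiA_gen homW11 card_wr card_ord /=. by rewrite divr1. Qed.
Lemma z12 : zetaA ('I_1 : finGroupType) 2 = 2.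
Proof. rewrite /zetaA /chiA_wreath /chiA_gen homW12 card_wr card_ord (_ : (_ * _)%N = 2%N) //. all: field. Qed.
Lemma z21 : zetaA ('I_2 : finGroupType) 1 = 2.
Proof. rewrite /zetaA /chiA_wreath /chiA_gen homW21 card_wr card_ord (_ : (_ * _)%N = 2%N) //. all: field. Qed.
Lemma z22 : zetaA ('I_2 : finGroupType) 2 = 4.
Proof. rewrite /zetaA /chiA_wreath /chiA_gen homW22 card_wr card_ord (_ : (_ * _)%N = 8%N) //. all: field. Qed.
Lemma c2 : chiA ('I_2 : finGroupType) = 2.
Proof. rewrite /chiA /chiA_gen homI2 card_ord. by []. Qed.
Lemma c1 : chiA ('I_1 : finGroupType) = 1.
Proof. rewrite /chiA /chiA_gen homI1 card_ord. by rewrite divr1. Qed.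

Lemma five : (2 * (2 - 1 ^+ 2 / 2) + 2 ^+ 2 * 1 ^+ 2 / 2 : rat) = 5.
Proof. field. all: by []. Qed.

Theorem mainTheorem8 :
  [/\ [/\ zetaA ('I_1 : finGroupType) 0 = 1%R,
          zetaA ('I_1 : finGroupType) 1 = 1%R &
          zetaA ('I_1 : finGroupType) 2 = 2%R],
      [/\ zetaA ('I_2 : finGroupType) 0 = 1%R,
          zetaA ('I_2 : finGroupType) 1 = 2%R &
          zetaA ('I_2 : finGroupType) 2 = 4%R],
      chiA ('I_2 : finGroupType) = 2%R,
      zetaA ('I_2 : finGroupType)
        <> fps_powr (zetaA ('I_1 : finGroupType)) (chiA ('I_2 : finGroupType))
    & ~ (exists Z : fps, Z 0 = 1%R /\
           forall gT : finGroupType, zetaA gT = fps_powr Z (chiA gT))].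
Proof.
split.
- by split; [| exact: z11 | exact: z12].
- by split; [| exact: z21 | exact: z22].
- exact: c2.
- move=> H.
  have e : zetaA ('I_2 : finGroupType) 2 =
    fps_powr (zetaA ('I_1 : finGroupType)) (chiA ('I_2 : finGroupType)) 2 by rewrite -H.
  by move: e; rewrite powr2 z22 c2 z11 z12 five => /eqP.
- case=> Z [Z0 HZ].
  have h1 := HZ ('I_1 : finGroupType); have h2 := HZ ('I_2 : finGroupType).
  rewrite c1 in h1; rewrite c2 in h2.
  have e1 : zetaA ('I_1 : finGroupType) 1 = fps_powr Z 1 1 by rewrite h1.
  have e2 : zetaA ('I_1 : finGroupType) 2 = fps_powr Z 1 2 by rewrite h1.
  have e3 : zetaA ('I_2 : finGroupType) 2 = fps_powr Z 2 2 by rewrite h2.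
  rewrite powr1 z11 in e1; rewrite powr2 z12 in e2; rewrite powr2 z22 in e3.
  have Z1 : Z 1%N = 1 by rewrite -[LHS]mul1r -e1.
  have Z2 : Z 2%N = 2.
    by rewrite e2 Z1; field.
  by move: e3; rewrite Z1 Z2 five => /eqP.
Qed.
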